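(* Let $\Pi$ be a max-FGPP with constants satisfying $\frac{\alpha_1}{2}\ge\alpha_2$. Let $\mathcal{I}=(G=(V,E),k,p)$ be an instance of $\Pi$ and define the instance $f(\mathcal{I})=(U,\mathcal{S},w,k',p')$ of the maximization version of $k'$-WEC by: $U=V$; $\mathcal{S}=\bigcup_{i=1}^k\mathcal{S}_i$, where $\mathcal{S}_i$ is the family of node-sets of connected subgraphs of $G$ on exactly $i$ nodes; $w(S)=\mathrm{val}(S)$ for all $S\in\mathcal{S}$; $k'=k$ and $p'=p$. Then $\mathcal{I}$ is a yes-instance of $\Pi$ if and only if $f(\mathcal{I})$ is a yes-instance of the maximization version of $k'$-WEC.
   Context: Graphs are finite, simple and undirected. For $G=(V,E)$ and $X\subseteq V$, $E(X)$ is the set of edges with both endpoints in $X$, $E(X,V\setminus X)$ the set of edges with exactly one endpoint in $X$, and $\mathrm{val}(X)=\alpha_1|E(X)|+\alpha_2|E(X,V\setminus X)|$. The max-FGPP $\Pi$ defined by $\alpha_1,\alpha_2\in\mathbb{R}$: given $G=(V,E)$, $k\in\mathbb{N}$ and $p\in\mathbb{R}$, decide whether there is $X\subseteq V$ with $|X|=k$ and $\mathrm{val}(X)\ge p$. Maximization version of Weighted $k'$-Exact Cover ($k'$-WEC): given a universe $U$, a family $\mathcal{S}$ of nonempty subsets of $U$, a function $w:\mathcal{S}\to\mathbb{R}$, $k'\in\mathbb{N}$ and $p'\in\mathbb{R}$, decide whether there is a subfamily $\mathcal{S}'\subseteq\mathcal{S}$ of pairwise disjoint sets with $|\bigcup\mathcal{S}'|=k'$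 and $\sum_{S\in\mathcal{S}'}w(S)\ge p'$. *)

(* Defs.v *)
From mathcomp Require Import all_boot all_order all_algebra.
Set Implicit Arguments. Unset Strict Implicit. Unset Printing Implicit Defensive.
Import Order.TTheory GRing.Theory Num.Theory.
Local Open Scope ring_scope.

(* A finite simple undirected graph is given by a finType V and a symmetric,
   irreflexive edge relation e : rel V.  Edges are the 2-element sets {x,y}
   with e x y. *)

Section Graph.
Variables (V : finType) (e : rel V).

Definition edges_in (X : {set V}) : {set {set V}} :=
  [set A : {set V} | [exists x, exists y,
     [&& A == [set x; y], e x y, x \in X & y \in X]]].

Definition edges_cut (X : {set V}) : {set {set V}} :=
  [set A : {set V} | [exists x, exists y,
     [&& A == [set x; y], e x y, x \in X & y \notin X]]].

Definition fgpp_val (R : numDomainType) (a1 a2 : R) (X : {set V}) : R :=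
  a1 * (#|edges_in X|)%:R + a2 * (#|edges_cut X|)%:R.

Definition fgpp_yes (R : numDomainType) (a1 a2 : R) (k : nat) (p : R) : Prop :=
  exists X : {set V}, #|X| = k /\ p <= fgpp_val a1 a2 X.

Definition induced_rel (S : {set V}) : rel V :=
  [rel x y | [&& x \in S, y \in S & e x y]].
Definition induced_connected (S : {set V}) : bool :=
  [forall x in S, forall y in S, connect (induced_rel S) x y].

Definition conn_family (k : nat) : {set {set V}} :=
  [set S : {set V} | [&& 1 <= #|S|, #|S| <= k & induced_connected S]]%N.

End Graph.

Definition wec_yes (U : finType) (R : numDomainType) (F : {set {set U}})
    (w : {set U} -> R) (k' : nat) (p' : R) : Prop :=
  exists F' : {set {set U}},
    [/\ F' \subset F,
        {in F' &, forall A B : {set U}, A != B -> [disjoint A & B]},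
        #|\bigcup_(A in F') A| = k'
      & p' <= \sum_(A in F') w A].

(* Main.v *)
Require Import Defs.
From mathcomp Require Import all_boot all_order all_algebra.
From mathcomp Require Import ring lra.
Import Order.TTheory GRing.Theory Num.Theory.
Local Open Scope ring_scope.
Set Implicit Arguments. Unset Strict Implicit.

Lemma natb_and (R : numDomainType) (b c : bool) :
  ((b && c)%:R : R) = b%:R * c%:R.
Proof. by case: b; case: c; rewrite /= ?mulr1n ?mulr0n ?mulr1 ?mulr0. Qed.

Lemma natb_neq (R : numDomainType) (b c : bool) :
  ((b != c)%:R : R) = b%:R + c%:R - 2 * (b%:R * c%:R).
Proof.
by case: b; case: c; rewrite /= ?mulr1n ?mulr0n ?mulr1 ?mulr0 ?add0r ?addr0 ?subr0 //; ring.
Qed.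

Lemma card_natr (R : numDomainType) (T : finType) (B : {set T}) :
  (#|B|%:R : R) = \sum_(A : T) (A \in B)%:R.
Proof.
rewrite -[LHS]mulr1n -sumr_const big_mkcond /=.
by apply: eq_bigr => A _; case: (A \in B).
Qed.

Definition gA (R : numDomainType) (a1 a2 : R) (V : finType) (e : rel V)
  (S A : {set V}) : R :=
  a1 * (A \in edges_in e S)%:R + a2 * (A \in edges_cut e S)%:R.

Lemma val_sum (R : numDomainType) (a1 a2 : R) (V : finType) (e : rel V) S :
  fgpp_val e a1 a2 S = \sum_A gA a1 a2 e S A.
Proof.
by rewrite /fgpp_val /gA big_split /= -!mulr_sumr !card_natr.
Qed.

Lemma in_edges_in (V : finType) (e : rel V) x y (S : {set V}) :
  e x y -> ([set x; y] \in edges_in e S) = (x \in S) && (y \in S).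
Proof.
move=> exy; apply/idP/idP.
- rewrite inE => /existsP[x' /existsP[y' /and4P[/eqP E _ Hx Hy]]].
  have hx : x \in [set x'; y'] by rewrite -E set21.
  have hy : y \in [set x'; y'] by rewrite -E set22.
  by case/set2P: hx => ->; case/set2P: hy => ->; rewrite ?Hx ?Hy.
- case/andP => Hx Hy; rewrite inE; apply/existsP; exists x; apply/existsP;
  exists y; by rewrite eqxx exy Hx Hy.
Qed.

Lemma in_edges_cut (V : finType) (e : rel V) (esym : symmetric e)
  (eirr : irreflexive e) x y (S : {set V}) :
  e x y -> ([set x; y] \in edges_cut e S) = ((x \in S) != (y \in S)).
Proof.
move=> exy.
have nxy : x != y by apply/eqP => Exy; move: exy; rewrite Exy eirr.
apply/idP/idP.
- rewrite inE => /existsP[x' /existsP[y' /and4P[/eqP E _ Hx Hy]]].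
  have hx : x \in [set x'; y'] by rewrite -E set21.
  have hy : y \in [set x'; y'] by rewrite -E set22.
  case/set2P: hx => Ex; case/set2P: hy => Ey.
  + by move: nxy; rewrite Ex Ey eqxx.
  + by rewrite Ex Ey Hx (negbTE Hy).
  + by rewrite Ex Ey Hx (negbTE Hy).
  + by move: nxy; rewrite Ex Ey eqxx.
- case: (boolP (x \in S)) => Hx; case: (boolP (y \in S)) => Hy //= _;
  rewrite inE; apply/existsP.
  + exists x; apply/existsP; exists y; by rewrite eqxx exy Hx Hy.
  + exists y; apply/existsP; exists x; by rewrite setUC eqxx esym exy Hx Hy.
Qed.

Lemma sum_disj (R : numDomainType) (V : finType) (F : {set {set V}})
  (dis : {in F &, forall A B : {set V}, A != B -> [disjoint A & B]}) x :
  \sum_(S in F) ((x \in S)%:R : R) = (x \in \bigcup_(S in F) S)%:R.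
Proof.
case: (boolP (x \in \bigcup_(S in F) S)) => [/bigcupP[S0 HS0 xS0]|nx].
- rewrite (bigD1 S0) //= xS0 big1 ?addr0 // => S /andP[HS neq].
  have := dis S S0 HS HS0 neq => /disjointFr Hd.
  case: (boolP (x \in S)) => // xS; by move: (Hd x xS); rewrite xS0.
- rewrite big1 // => S HS; case: (boolP (x \in S)) => // xS.
  by case/negP: nx; apply/bigcupP; exists S.
Qed.

Lemma sum_form (R : numDomainType) (a1 a2 : R) (V : finType) (e : rel V)
  (esym : symmetric e) (eirr : irreflexive e) (F : {set {set V}})
  (dis : {in F &, forall A B : {set V}, A != B -> [disjoint A & B]}) x y :
  e x y ->
  \sum_(S in F) gA a1 a2 e S [set x; y] =
  a1 * (\sum_(S in F) ((x \in S)%:R * (y \in S)%:R)) +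
  a2 * ((x \in \bigcup_(S in F) S)%:R + (y \in \bigcup_(S in F) S)%:R
        - 2 * (\sum_(S in F) ((x \in S)%:R * (y \in S)%:R))).
Proof.
move=> exy.
rewrite /gA.
under [X in X = _]eq_bigr => S _ do rewrite (in_edges_in S exy) (in_edges_cut esym eirr S exy) natb_and natb_neq.
rewrite big_split /= -mulr_sumr -mulr_sumr; congr (_ + _ * _).
rewrite sumrB big_split /= -mulr_sumr !sum_disj //.
Qed.

Lemma P_le (R : realFieldType) (V : finType) (F : {set {set V}})
  (dis : {in F &, forall A B : {set V}, A != B -> [disjoint A & B]}) x y :
  \sum_(S in F) (((x \in S)%:R : R) * (y \in S)%:R) <=
  (x \in \bigcup_(S in F) S)%:R * (y \in \bigcup_(S in F) S)%:R.
Proof.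
have H1 : \sum_(S in F) (((x \in S)%:R : R) * (y \in S)%:R) <=
          (x \in \bigcup_(S in F) S)%:R.
  rewrite -sum_disj //; apply: ler_sum => S _.
  by case: (x \in S); case: (y \in S); rewrite /= ?mulr1n ?mulr0n ?mulr1 ?mulr0.
have H2 : \sum_(S in F) (((x \in S)%:R : R) * (y \in S)%:R) <=
          (y \in \bigcup_(S in F) S)%:R.
  rewrite -sum_disj //; apply: ler_sum => S _.
  by case: (x \in S); case: (y \in S); rewrite /= ?mulr1n ?mulr0n ?mulr1 ?mulr0.
move: H1 H2; case: (x \in _); case: (y \in _);
  rewrite /= ?mulr1n ?mulr0n ?mulr1 ?mulr0 //.
Qed.

Lemma P_eq (R : realFieldType) (V : finType) (F : {set {set V}})
  (dis : {in F &, forall A B : {set V}, A != B -> [disjoint A & B]}) x y :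
  (x \in \bigcup_(S in F) S -> y \in \bigcup_(S in F) S ->
     exists2 S, S \in F & (x \in S) && (y \in S)) ->
  \sum_(S in F) (((x \in S)%:R : R) * (y \in S)%:R) =
  (x \in \bigcup_(S in F) S)%:R * (y \in \bigcup_(S in F) S)%:R.
Proof.
move=> H; apply/eqP; rewrite eq_le P_le //=.
case: (boolP (x \in _)) => hx; case: (boolP (y \in _)) => hy;
  rewrite /= ?mulr1n ?mulr0n ?mulr1 ?mulr0;
  try (apply: sumr_ge0 => S _; apply: mulr_ge0; apply: ler0n).
have [S0 HS0 /andP[xS0 yS0]] := H hx hy.
rewrite (bigD1 S0) //= xS0 yS0 /= mulr1n mulr1 lerDl.
apply: sumr_ge0 => S _; apply: mulr_ge0; apply: ler0n.
Qed.

Lemma gA_nonedge (R : numDomainType) (a1 a2 : R) (V : finType) (e : rel V)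
  (A : {set V}) :
  ~~ [exists x, exists y, (A == [set x; y]) && e x y] ->
  forall S, gA a1 a2 e S A = 0.
Proof.
move=> nE S; rewrite /gA.
have h1 : (A \in edges_in e S) = false.
  apply/negbTE; apply: contra nE; rewrite inE.
  move=> /existsP[x /existsP[y /and4P[H1 H2 _ _]]].
  by apply/existsP; exists x; apply/existsP; exists y; rewrite H1 H2.
have h2 : (A \in edges_cut e S) = false.
  apply/negbTE; apply: contra nE; rewrite inE.
  move=> /existsP[x /existsP[y /and4P[H1 H2 _ _]]].
  by apply/existsP; exists x; apply/existsP; exists y; rewrite H1 H2.
by rewrite h1 h2 /= !mulr0n !mulr0 addr0.
Qed.

Lemma perA_le (R : realFieldType) (a1 a2 : R) (V : finType) (e : rel V)
  (esym : symmetric e) (eirr : irreflexive e) (F : {set {set V}})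
  (dis : {in F &, forall A B : {set V}, A != B -> [disjoint A & B]}) A :
  2 * a2 <= a1 ->
  \sum_(S in F) gA a1 a2 e S A <= gA a1 a2 e (\bigcup_(S in F) S) A.
Proof.
move=> ha.
case: (boolP [exists x, exists y, (A == [set x; y]) && e x y]) =>
  [/existsP[x /existsP[y /andP[/eqP -> exy]]] | nE].
- rewrite (sum_form _ _ esym eirr dis exy) /gA (in_edges_in _ exy)
    (in_edges_cut esym eirr _ exy) natb_and natb_neq.
  have := P_le R dis x y.
  move: (\sum_(S in F) _) => P.
  move: ((x \in _)%:R) ((y \in _)%:R) => bx by' HP.
  nra.
- rewrite gA_nonedge // big1 // => S _; exact: gA_nonedge.
Qed.

Lemma perA_eq (R : realFieldType) (a1 a2 : R) (V : finType) (e : rel V)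
  (esym : symmetric e) (eirr : irreflexive e) (F : {set {set V}})
  (dis : {in F &, forall A B : {set V}, A != B -> [disjoint A & B]}) A :
  (forall x y, e x y -> x \in \bigcup_(S in F) S -> y \in \bigcup_(S in F) S ->
     exists2 S, S \in F & (x \in S) && (y \in S)) ->
  \sum_(S in F) gA a1 a2 e S A = gA a1 a2 e (\bigcup_(S in F) S) A.
Proof.
move=> hc.
case: (boolP [exists x, exists y, (A == [set x; y]) && e x y]) =>
  [/existsP[x /existsP[y /andP[/eqP -> exy]]] | nE].
- rewrite (sum_form _ _ esym eirr dis exy) /gA (in_edges_in _ exy)
    (in_edges_cut esym eirr _ exy) natb_and natb_neq.
  by rewrite (P_eq R dis (hc x y exy)).
- rewrite gA_nonedge // big1 // => S _; exact: gA_nonedge.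
Qed.

Lemma sum_val_le (R : realFieldType) (a1 a2 : R) (V : finType) (e : rel V)
  (esym : symmetric e) (eirr : irreflexive e) (F : {set {set V}})
  (dis : {in F &, forall A B : {set V}, A != B -> [disjoint A & B]}) :
  2 * a2 <= a1 ->
  \sum_(S in F) fgpp_val e a1 a2 S <= fgpp_val e a1 a2 (\bigcup_(S in F) S).
Proof.
move=> ha; rewrite val_sum.
under [X in X <= _]eq_bigr => S _ do rewrite val_sum.
rewrite exchange_big /=; apply: ler_sum => A _.
exact: perA_le.
Qed.

Lemma sum_val_eq (R : realFieldType) (a1 a2 : R) (V : finType) (e : rel V)
  (esym : symmetric e) (eirr : irreflexive e) (F : {set {set V}})
  (dis : {in F &, forall A B : {set V}, A != B -> [disjoint A & B]}) :
  (forall x y, e x y -> x \in \bigcup_(S in F) S -> y \in \bigcup_(S in F) S ->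
     exists2 S, S \in F & (x \in S) && (y \in S)) ->
  \sum_(S in F) fgpp_val e a1 a2 S = fgpp_val e a1 a2 (\bigcup_(S in F) S).
Proof.
move=> hc; rewrite val_sum.
under [X in X = _]eq_bigr => S _ do rewrite val_sum.
rewrite exchange_big /=; apply: eq_bigr => A _.
exact: perA_eq.
Qed.

Unset Implicit Arguments. Set Strict Implicit.

Theorem lemma1 (R : realFieldType) (a1 a2 : R) (V : finType) (e : rel V)
    (esym : symmetric e) (eirr : irreflexive e) (k : nat) (p : R) :
  a2 <= a1 / 2 ->
  fgpp_yes e a1 a2 k p <->
  wec_yes (conn_family e k) (fgpp_val e a1 a2) k p.
Proof.
move=> ha; have ha' : 2 * a2 <= a1 by lra.
split.
- case=> X [cX hp].
  pose r := induced_rel e X.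
  have rsym : symmetric r.
    by move=> u v; rewrite /r /induced_rel /= esym; case: (u \in X); case: (v \in X).
  have csym := sym_connect_sym rsym.
  have conn_in : forall u v, connect r u v -> u \in X -> v \in X.
    move=> u v /connectP[q pq ->]; elim: q u pq => //= z q IH u /andP[ruz pq] _.
    by apply: IH pq _; case/and3P: ruz.
  pose comp := fun x => [set y | connect r x y].
  pose F := comp @: X.
  have compX : forall a, a \in X -> comp a \subset X.
    by move=> a Ha; apply/subsetP => z; rewrite inE => h; exact: conn_in h Ha.
  have UF : \bigcup_(S in F) S = X.
    apply/setP => z; apply/bigcupP/idP => [[S /imsetP[a Ha ->]] | Hz].
    + exact: (subsetP (compX a Ha)).
    + by exists (comp z); [exact: imset_f | rewrite inE connect0].
  have dis : {in F &, forall A B : {set V}, A != B -> [disjoint A & B]}.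
    move=> _ _ /imsetP[a Ha ->] /imsetP[b Hb ->] neq.
    rewrite disjoint_subset; apply/subsetP => z; rewrite inE => caz.
    rewrite !inE; apply/negP => cbz.
    case/negP: neq; apply/eqP/setP => w; rewrite !inE.
    have cab : connect r a b by apply: (connect_trans caz); rewrite csym.
    apply/idP/idP => h.
    + by apply: (connect_trans _ h); rewrite csym.
    + exact: (connect_trans cab h).
  exists F; split.
  + apply/subsetP => _ /imsetP[a Ha ->]; rewrite inE; apply/and3P; split.
    * by rewrite card_gt0; apply/set0Pn; exists a; rewrite inE connect0.
    * by rewrite -cX; exact: subset_leq_card (compX a Ha).
    * apply/forallP => u; apply/implyP; rewrite inE => au.
      apply/forallP => v; apply/implyP; rewrite inE => av.
      have : connect r u v by apply: (connect_trans _ av); rewrite csym.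
      case/connectP => q pq ->; apply/connectP; exists q => //.
      have pq0 := pq.
      apply: (sub_in_path (P := mem (comp a))) pq.
        by move=> s t hs ht /and3P[_ _ est]; apply/and3P; split; [exact: hs | exact: ht | exact: est].
      apply/allP => z hz; suff : z \in comp a by []; rewrite inE.
      exact: (connect_trans au (path_connect pq0 hz)).
  + exact: dis.
  + by rewrite UF.
  + have -> : \sum_(S in F) fgpp_val e a1 a2 S = fgpp_val e a1 a2 X.
      rewrite (@sum_val_eq R a1 a2 V e esym eirr F dis) ?UF //.
      move=> x y exy hx hy.
      exists (comp x); first exact: imset_f.
      by rewrite !inE connect0 /=; apply: connect1; rewrite /r /induced_rel /= hx hy exy.
    exact: hp.
- case=> F' [sub dis cU hp].
  exists (\bigcup_(S in F') S); split => //.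
  apply: (le_trans hp); exact: sum_val_le.
Qed.
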